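(* Let $b\ge a>1$ and define, for $t\in\mathbb{R}$, $$F_1(t)=\sum_{j=2}^\infty\frac{\exp\big(i t\, j^2(\log j)^b\big)}{j(\log j)^a}.$$ Then $F_1$, $\operatorname{Re}F_1$ and $\operatorname{Im}F_1$ are continuous and bounded on $\mathbb{R}$ but differentiable at no point of $\mathbb{R}$. If $b>a>1$, none of them is Lipschitz continuous at any point of $\mathbb{R}$.
   Context: A function $g\colon\mathbb{R}\to\mathbb{C}$ is Lipschitz continuous at $t_0$ if there exist constants $L>0$, $\eta>0$ such that $|g(t)-g(t_0)|\le L|t-t_0|$ for all $t\in\,]t_0-\eta,t_0+\eta[$. *)

(* Defs.v *)
(* classical real analysis. Complex numbers are modelled as
   pairs (real part, imaginary part) : R * R with the usual modulus. *)
From Stdlib Require Import Reals ClassicalEpsilon.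
Open Scope R_scope.

(* The value of a convergent real series sum_{n>=0} u n (unspecified if divergent). *)
Definition series_sum (u : nat -> R) : R :=
  epsilon (inhabits 0) (fun l => infinite_sum u l).

(* j = n + 2 runs over j >= 2. *)
Definition jj (n : nat) : R := INR (n + 2).

(* Real and imaginary parts of exp(i t j^2 (log j)^b) / (j (log j)^a). *)
Definition re_term (a b t : R) (n : nat) : R :=
  cos (t * (jj n) ^ 2 * Rpower (ln (jj n)) b) / (jj n * Rpower (ln (jj n)) a).
Definition im_term (a b t : R) (n : nat) : R :=
  sin (t * (jj n) ^ 2 * Rpower (ln (jj n)) b) / (jj n * Rpower (ln (jj n)) a).

Definition ReF1 (a b : R) (t : R) : R := series_sum (re_term a b t).
Definition ImF1 (a b : R) (t : R) : R := series_sum (im_term a b t).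
Definition F1 (a b : R) (t : R) : R * R := (ReF1 a b t, ImF1 a b t).

Definition Cmod (z : R * R) : R := sqrt (fst z ^ 2 + snd z ^ 2).
Definition Csub (z w : R * R) : R * R := (fst z - fst w, snd z - snd w).

Definition continuous_C (g : R -> R * R) (t0 : R) : Prop :=
  forall eps, 0 < eps -> exists delta, 0 < delta /\
    forall t, Rabs (t - t0) < delta -> Cmod (Csub (g t) (g t0)) < eps.

Definition differentiable_C (g : R -> R * R) (t0 : R) : Prop :=
  exists l : R * R, forall eps, 0 < eps -> exists delta, 0 < delta /\
    forall h, h <> 0 -> Rabs h < delta ->
      Cmod (Csub (fst (Csub (g (t0 + h)) (g t0)) / h,
                  snd (Csub (g (t0 + h)) (g t0)) / h) l) < eps.

Definition bounded_C (g : R -> R * R) : Prop :=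
  exists M, forall t, Cmod (g t) <= M.

Definition bounded_R (g : R -> R) : Prop :=
  exists M, forall t, Rabs (g t) <= M.

Definition lipschitz_at_C (g : R -> R * R) (t0 : R) : Prop :=
  exists L eta, 0 < L /\ 0 < eta /\
    forall t, t0 - eta < t < t0 + eta ->
      Cmod (Csub (g t) (g t0)) <= L * Rabs (t - t0).

Definition lipschitz_at_R (g : R -> R) (t0 : R) : Prop :=
  exists L eta, 0 < L /\ 0 < eta /\
    forall t, t0 - eta < t < t0 + eta ->
      Rabs (g t - g t0) <= L * Rabs (t - t0).

(* Main.v *)
Require Import Defs.
From Stdlib Require Import Reals Lra Lia Psatz ClassicalEpsilon.
Open Scope R_scope.

Lemma sin_lower y : 0 <= y <= 1 -> 5/6 * y <= sin y.
Proof.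
  intros [h0 h1]. destruct (SIN y h0) as [H _]. { pose proof PI2_1. pose proof PI_RGT_0. lra. }
  unfold sin_lb, sin_approx, sin_term in H. simpl in H.
  assert (E: y - y^3/6 + y^5/120 - y^7/5040 <= sin y).
  { eapply Rle_trans; [|exact H]. right. field. }
  assert (0 <= y^2 <= 1) by (split; nra).
  assert (0 <= y^5) by (apply pow_le; lra).
  assert (y^7 <= y^5) by (replace (y^7) with (y^5*y^2) by ring; nra).
  assert (y^3 <= y) by (replace (y^3) with (y*y^2) by ring; nra).
  lra.
Qed.

Lemma sin_sq_lower y : Rabs y <= 1 -> 25/36 * y^2 <= sin y ^ 2.
Proof.
  intros H. destruct (Rle_dec 0 y).
  - rewrite Rabs_right in H by lra. pose proof (sin_lower y (conj r H)). nra.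
  - rewrite Rabs_left in H by lra. assert (Hy: 0 <= -y <= 1) by lra. pose proof (sin_lower (-y) Hy).
    rewrite sin_neg in H0. nra.
Qed.

Lemma sum_swap (f : nat -> nat -> R) (m n : nat) :
  sum_f_R0 (fun i => sum_f_R0 (fun k => f i k) n) m =
  sum_f_R0 (fun k => sum_f_R0 (fun i => f i k) m) n.
Proof.
  induction m as [|m IH]; simpl.
  - reflexivity.
  - rewrite IH, <- sum_plus. reflexivity.
Qed.

Definition Ssum (p : nat) (x al : R) := sum_f_R0 (fun m => cos (INR m * x + al)) p.

Lemma sin_pm A u : sin (A + u) - sin (A - u) = 2 * cos A * sin u.
Proof. rewrite sin_plus, sin_minus. ring. Qed.

Lemma Ssum_tele p x al :
  2 * sin (x/2) * Ssum p x al = sin ((INR p + /2) * x + al) - sin (al - x/2).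
Proof.
  induction p as [|p IH]; unfold Ssum in *.
  - simpl sum_f_R0. simpl INR.
    replace (2 * sin (x / 2) * cos (0 * x + al)) with
      (sin ((0 * x + al) + x/2) - sin ((0 * x + al) - x/2)) by (rewrite sin_pm; ring).
    replace (0 * x + al + x/2) with ((0 + /2) * x + al) by field.
    replace (0 * x + al - x/2) with (al - x/2) by field. ring.
  - rewrite tech5, Rmult_plus_distr_l, IH.
    rewrite S_INR.
    replace (2 * sin (x / 2) * cos ((INR p + 1) * x + al)) with
      (sin (((INR p + 1) * x + al) + x/2) - sin (((INR p + 1) * x + al) - x/2))
      by (rewrite sin_pm; ring).
    replace ((INR p + 1) * x + al - x / 2) with ((INR p + / 2) * x + al) by field.
    replace ((INR p + 1) * x + al + x / 2) with ((INR p + 1 + / 2) * x + al) by field.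
    ring.
Qed.

Lemma Ssum_closed p x al :
  sin (x/2) * Ssum p x al = cos (INR p * x / 2 + al) * sin ((INR p + 1) * x / 2).
Proof.
  assert (H := Ssum_tele p x al).
  rewrite form4 in H.
  replace (((INR p + / 2) * x + al + (al - x / 2)) / 2) with (INR p * x / 2 + al) in H by field.
  replace (((INR p + / 2) * x + al - (al - x / 2)) / 2) with ((INR p + 1) * x / 2) in H by field.
  lra.
Qed.

Lemma Ssum_zero p x al : sin (x/2) <> 0 -> sin ((INR p + 1) * x / 2) = 0 -> Ssum p x al = 0.
Proof.
  intros H1 H2. pose proof (Ssum_closed p x al) as H. rewrite H2, Rmult_0_r in H.
  apply Rmult_integral in H. destruct H; [contradiction|auto].
Qed.

Lemma Ssum_bound p x al : Rabs (sin (x/2) * Ssum p x al) <= 1.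
Proof.
  rewrite Ssum_closed, Rabs_mult.
  pose proof (COS_bound (INR p * x / 2 + al)). pose proof (SIN_bound ((INR p + 1) * x / 2)).
  assert (Rabs (cos (INR p * x / 2 + al)) <= 1) by (apply Rabs_le; lra).
  assert (Rabs (sin ((INR p + 1) * x / 2)) <= 1) by (apply Rabs_le; lra).
  pose proof (Rabs_pos (cos (INR p * x / 2 + al))). pose proof (Rabs_pos (sin ((INR p + 1) * x / 2))).
  nra.
Qed.

Definition DSum (p : nat) (F : nat -> nat -> R) :=
  sum_f_R0 (fun m1 => sum_f_R0 (fun m2 => F m1 m2) p) p.

Lemma DSum_ext p F G : (forall m1 m2, F m1 m2 = G m1 m2) -> DSum p F = DSum p G.
Proof. intros H. unfold DSum. apply sum_eq. intros. apply sum_eq. intros. apply H. Qed.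

Lemma DSum_plus p F G : DSum p (fun a b => F a b + G a b) = DSum p F + DSum p G.
Proof.
  unfold DSum. rewrite <- sum_plus. apply sum_eq. intros. apply sum_plus.
Qed.

Lemma DSum_scal p F r : DSum p (fun a b => r * F a b) = r * DSum p F.
Proof.
  unfold DSum. rewrite scal_sum. apply sum_eq. intros. rewrite Rmult_comm, scal_sum.
  apply sum_eq. intros. ring.
Qed.

Lemma sum_le_const (f : nat -> R) n B : (forall k, (k <= n)%nat -> f k <= B) ->
  sum_f_R0 f n <= (INR n + 1) * B.
Proof.
  induction n as [|n IH]; intros H.
  - simpl. specialize (H 0%nat (le_n _)). lra.
  - rewrite tech5, S_INR. assert (H1 := H (S n) (le_n _)).
    assert (sum_f_R0 f n <= (INR n + 1) * B) by (apply IH; intros; apply H; lia). lra.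
Qed.

Lemma DSum_abs p F B : (forall m1 m2, (m1 <= p)%nat -> (m2 <= p)%nat -> Rabs (F m1 m2) <= B) ->
  Rabs (DSum p F) <= (INR p + 1)^2 * B.
Proof.
  intros H. unfold DSum. eapply Rle_trans. apply Rsum_abs.
  replace ((INR p + 1)^2 * B) with ((INR p + 1) * ((INR p + 1) * B)) by ring.
  apply sum_le_const. intros m1 Hm1. eapply Rle_trans. apply Rsum_abs.
  apply sum_le_const. intros m2 Hm2. auto.
Qed.

Lemma DSum_const p r : DSum p (fun _ _ => r) = (INR p + 1)^2 * r.
Proof.
  unfold DSum.
  assert (E: forall n r, sum_f_R0 (fun _ => r) n = (INR n + 1) * r).
  { induction n; intros r0. simpl; ring. rewrite tech5, IHn, S_INR. ring. }
  rewrite (sum_eq _ (fun _ => (INR p + 1) * r)) by (intros; apply E).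
  rewrite E. ring.
Qed.

Definition DS p x al := DSum p (fun m1 m2 => cos ((INR m1 + INR m2) * x + al)).

Lemma DS_inner p x al : DS p x al = sum_f_R0 (fun m1 => Ssum p x (INR m1 * x + al)) p.
Proof.
  unfold DS, DSum, Ssum. apply sum_eq. intros. apply sum_eq. intros.
  f_equal. ring.
Qed.

Lemma DS_closed p x al : sin (x/2) * DS p x al = sin ((INR p + 1) * x / 2) * Ssum p x (INR p * x / 2 + al).
Proof.
  rewrite DS_inner, scal_sum. unfold Ssum at 2. rewrite scal_sum.
  apply sum_eq. intros i _. rewrite Rmult_comm, Ssum_closed. 
  replace (INR p * x / 2 + (INR i * x + al)) with (INR i * x + (INR p * x / 2 + al)) by ring.
  ring.
Qed.

Lemma DS_zero p x al : sin (x/2) <> 0 -> sin ((INR p + 1) * x / 2) = 0 -> DS p x al = 0.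
Proof.
  intros H1 H2. rewrite DS_inner. transitivity (sum_f_R0 (fun _ => 0) p).
  - apply sum_eq. intros. apply Ssum_zero; auto.
  - clear. induction p; simpl; [auto| rewrite IHp; ring].
Qed.

Lemma DS_bound p x al : sin (x/2) <> 0 -> Rabs (DS p x al) <= 1 / sin (x/2) ^ 2.
Proof.
  intros H. 
  assert (E: sin (x/2)^2 * DS p x al = sin ((INR p + 1) * x / 2) * (sin (x/2) * Ssum p x (INR p * x / 2 + al))).
  { replace (sin (x/2)^2 * DS p x al) with (sin (x/2) * (sin (x/2) * DS p x al)) by ring.
    rewrite DS_closed. ring. }
  assert (B: Rabs (sin (x/2)^2 * DS p x al) <= 1).
  { rewrite E, Rabs_mult. pose proof (Ssum_bound p x (INR p * x / 2 + al)).
    pose proof (SIN_bound ((INR p + 1) * x / 2)).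
    assert (Rabs (sin ((INR p + 1) * x / 2)) <= 1) by (apply Rabs_le; lra).
    pose proof (Rabs_pos (sin ((INR p + 1) * x / 2))). pose proof (Rabs_pos (sin (x / 2) * Ssum p x (INR p * x / 2 + al))). nra. }
  rewrite Rabs_mult in B. rewrite (Rabs_right (sin (x/2)^2)) in B.
  2:{ apply Rle_ge. apply pow2_ge_0. }
  assert (0 < sin (x/2)^2) by (rewrite <- Rsqr_pow2; apply Rsqr_pos_lt; auto).
  apply (Rmult_le_reg_l (sin (x/2)^2)); auto. 
  replace (sin (x / 2) ^ 2 * (1 / sin (x / 2) ^ 2)) with 1 by (field; auto). auto.
Qed.

Definition Tf p dl lj ph (f : R -> R) :=
  DSum p (fun m1 m2 => f ((INR m1 + INR m2) * dl) * cos (lj * ((INR m1 + INR m2) * dl) + ph)).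

Lemma T_ext p dl lj ph f g : (forall h, f h = g h) -> Tf p dl lj ph f = Tf p dl lj ph g.
Proof. intros H. unfold Tf. apply DSum_ext. intros. rewrite H. auto. Qed.

Lemma T_plus p dl lj ph f g : Tf p dl lj ph (fun h => f h + g h) = Tf p dl lj ph f + Tf p dl lj ph g.
Proof. unfold Tf. rewrite <- DSum_plus. apply DSum_ext. intros. ring. Qed.

Lemma T_scal p dl lj ph f r : Tf p dl lj ph (fun h => r * f h) = r * Tf p dl lj ph f.
Proof. unfold Tf. rewrite <- DSum_scal. apply DSum_ext. intros. ring. Qed.

Lemma T_sum p dl lj ph (F : nat -> R -> R) N :
  Tf p dl lj ph (fun h => sum_f_R0 (fun k => F k h) N) = sum_f_R0 (fun k => Tf p dl lj ph (F k)) N.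
Proof.
  induction N as [|N IH].
  - simpl. reflexivity.
  - rewrite tech5, <- IH, <- T_plus. apply T_ext. intros. rewrite tech5. auto.
Qed.

Lemma T_abs p dl lj ph f B : 0 <= dl ->
  (forall h, 0 <= h <= 2 * INR p * dl -> Rabs (f h) <= B) ->
  Rabs (Tf p dl lj ph f) <= (INR p + 1)^2 * B.
Proof.
  intros Hd H. unfold Tf. apply DSum_abs. intros m1 m2 H1 H2.
  rewrite Rabs_mult. 
  assert (Rabs (cos (lj * ((INR m1 + INR m2) * dl) + ph)) <= 1).
  { pose proof (COS_bound (lj * ((INR m1 + INR m2) * dl) + ph)). apply Rabs_le; lra. }
  assert (Rabs (f ((INR m1 + INR m2) * dl)) <= B).
  { apply H. apply le_INR in H1. apply le_INR in H2. pose proof (pos_INR m1). pose proof (pos_INR m2).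
    split; nra. }
  pose proof (Rabs_pos (f ((INR m1 + INR m2) * dl))).
  pose proof (Rabs_pos (cos (lj * ((INR m1 + INR m2) * dl) + ph))). nra.
Qed.

Lemma T_const p dl lj ph C : sin (lj * dl / 2) <> 0 -> sin ((INR p + 1) * (lj * dl) / 2) = 0 ->
  Tf p dl lj ph (fun _ => C) = 0.
Proof.
  intros H1 H2. unfold Tf.
  transitivity (C * DS p (lj * dl) ph).
  - unfold DS. rewrite <- DSum_scal. apply DSum_ext. intros. f_equal. f_equal. f_equal. ring.
  - rewrite DS_zero; [ring| |auto]. replace (lj * dl / 2) with (lj * dl / 2) by ring. auto.
Qed.

Lemma T_lin p dl lj ph : sin (lj * dl / 2) <> 0 -> sin ((INR p + 1) * (lj * dl) / 2) = 0 ->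
  Tf p dl lj ph (fun h => h) = 0.
Proof.
  intros H1 H2. set (x := lj * dl).
  assert (Z: forall al, Ssum p x al = 0) by (intros; apply Ssum_zero; auto).
  assert (A: DSum p (fun m1 m2 => INR m1 * cos ((INR m1 + INR m2) * x + ph)) = 0).
  { unfold DSum. transitivity (sum_f_R0 (fun _ => 0) p).
    - apply sum_eq. intros i _.
      transitivity (INR i * Ssum p x (INR i * x + ph)). 
      + unfold Ssum. rewrite scal_sum. apply sum_eq. intros. rewrite Rmult_comm. f_equal.
        f_equal. ring.
      + rewrite Z. ring.
    - clear. induction p; simpl; [auto| rewrite IHp; ring]. }
  assert (B: DSum p (fun m1 m2 => INR m2 * cos ((INR m1 + INR m2) * x + ph)) = 0).
  { rewrite <- A. unfold DSum. rewrite sum_swap. apply sum_eq. intros. apply sum_eq. intros.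
    f_equal. f_equal. ring. }
  unfold Tf. transitivity (dl * (DSum p (fun m1 m2 => INR m1 * cos ((INR m1 + INR m2) * x + ph))
       + DSum p (fun m1 m2 => INR m2 * cos ((INR m1 + INR m2) * x + ph)))).
  - rewrite <- DSum_plus, <- DSum_scal. apply DSum_ext. intros.
    replace (lj * ((INR m1 + INR m2) * dl) + ph) with ((INR m1 + INR m2) * x + ph) by (unfold x; ring).
    ring.
  - rewrite A, B. ring.
Qed.

Lemma T_cos p dl lj ph lk t0 ps :
  Tf p dl lj ph (fun h => cos (lk * (t0 + h) + ps)) =
  (DS p ((lk - lj) * dl) (lk * t0 + ps - ph) + DS p ((lk + lj) * dl) (lk * t0 + ps + ph)) / 2.
Proof.
  unfold Tf, DS. unfold Rdiv. rewrite Rmult_comm, <- DSum_plus, <- DSum_scal.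
  apply DSum_ext. intros m1 m2.
  set (s := INR m1 + INR m2).
  set (A := lk * (t0 + s * dl) + ps). set (Bb := lj * (s * dl) + ph).
  replace (s * ((lk - lj) * dl) + (lk * t0 + ps - ph)) with (A - Bb) by (unfold A, Bb; ring).
  replace (s * ((lk + lj) * dl) + (lk * t0 + ps + ph)) with (A + Bb) by (unfold A, Bb; ring).
  rewrite cos_minus, cos_plus. field.
Qed.

Lemma Rabs_le_between x y : Rabs x <= y -> -y <= x <= y.
Proof. intros H. unfold Rabs in H. destruct (Rcase_abs x); lra. Qed.

Lemma inf_sum_ext (u v : nat -> R) l : (forall N, sum_f_R0 u N = sum_f_R0 v N) ->
  infinite_sum u l -> infinite_sum v l.
Proof. intros H Hu eps He. destruct (Hu eps He) as [N HN]. exists N. intros n Hn. rewrite <- H. auto. Qed.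

Lemma partial_le (c : nat -> R) Sc : (forall k, 0 <= c k) -> infinite_sum c Sc ->
  forall N, sum_f_R0 c N <= Sc.
Proof.
  intros Hc HS N. apply (growing_ineq (fun n => sum_f_R0 c n)).
  - intros n. simpl. specialize (Hc (S n)). lra.
  - exact HS.
Qed.

Lemma tail_bound (u c : nat -> R) l Sc : (forall k, Rabs (u k) <= c k) ->
  infinite_sum u l -> infinite_sum c Sc ->
  forall N, Rabs (l - sum_f_R0 u N) <= Sc - sum_f_R0 c N.
Proof.
  intros H Hu Hc N.
  assert (H1: infinite_sum (fun k => c k - u k) (Sc - l)).
  { intros e He. destruct (CV_minus _ _ _ _ Hc Hu e He) as [N' HN']. exists N'. intros. rewrite minus_sum. apply HN'; auto. }
  assert (H2: infinite_sum (fun k => c k + u k) (Sc + l)).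
  { intros e He. destruct (CV_plus _ _ _ _ Hc Hu e He) as [N' HN']. exists N'. intros. rewrite sum_plus. apply HN'; auto. }
  assert (P1: forall k, 0 <= c k - u k) by (intros k; specialize (H k); apply Rabs_le_between in H; lra).
  assert (P2: forall k, 0 <= c k + u k) by (intros k; specialize (H k); apply Rabs_le_between in H; lra).
  assert (A1 := partial_le _ _ P1 H1 N).
  assert (A2 := partial_le _ _ P2 H2 N).
  rewrite minus_sum in A1. rewrite sum_plus in A2. apply Rabs_le. lra.
Qed.

Lemma sum_split_j (f : nat -> R) j N : (j <= N)%nat ->
  sum_f_R0 f N = f j + sum_f_R0 (fun k => if Nat.eq_dec k j then 0 else f k) N.
Proof.
  intros H. induction N as [|N IH].
  - assert (j = 0%nat) by lia. subst. simpl. ring.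
  - destruct (Nat.eq_dec (S N) j) as [E|E].
    + subst. rewrite !tech5. destruct (Nat.eq_dec (S N) (S N)); [|congruence].
      assert (Z: sum_f_R0 (fun k => if Nat.eq_dec k (S N) then 0 else f k) N = sum_f_R0 f N).
      { apply sum_eq. intros i Hi. destruct (Nat.eq_dec i (S N)); [lia|auto]. }
      rewrite Z. ring.
    + rewrite !tech5, IH by lia. destruct (Nat.eq_dec (S N) j); [congruence|]. ring.
Qed.

Lemma sum_ge_term (f : nat -> R) N k : (forall i, 0 <= f i) -> (k <= N)%nat -> f k <= sum_f_R0 f N.
Proof.
  intros H Hk. induction N as [|N IH].
  - assert (k = 0%nat) by lia. subst. simpl. lra.
  - rewrite tech5. destruct (Nat.eq_dec k (S N)).
    + subst. pose proof (cond_pos_sum f N H). lra.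
    + specialize (H (S N)). assert (f k <= sum_f_R0 f N) by (apply IH; lia). lra.
Qed.

Lemma sin_INR_PI Q : sin (INR Q * PI) = 0.
Proof. apply sin_eq_0_1. exists (Z.of_nat Q). rewrite INR_IZR_INZ. auto. Qed.

Lemma DS_bound2 p x al : 0 < Rabs x <= 2 -> Rabs (DS p x al) <= 144 / (25 * x^2).
Proof.
  intros H.
  assert (Hy: Rabs (x/2) <= 1).
  { unfold Rdiv. rewrite Rabs_mult, (Rabs_right (/2)) by lra. lra. }
  assert (L1 := sin_sq_lower (x/2) Hy).
  assert (Hx2: 0 < x^2). { rewrite <- Rsqr_pow2. apply Rsqr_pos_lt. intro; subst. rewrite Rabs_R0 in H. lra. }
  assert (Hs: 0 < sin (x/2)^2) by nra.
  assert (Hs0: sin (x/2) <> 0) by (intro E; rewrite E in Hs; lra).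
  eapply Rle_trans. apply DS_bound; auto.
  unfold Rdiv. rewrite Rmult_1_l. 
  apply (Rmult_le_reg_l (sin (x/2)^2)); auto.
  rewrite Rinv_r by lra.
  apply (Rmult_le_reg_l (25 * x^2)). nra.
  replace (25 * x ^ 2 * (sin (x / 2) ^ 2 * (144 * / (25 * x ^ 2)))) with (144 * sin (x/2)^2) by (field; intro E; rewrite E in Hx2; lra).
  replace ((x/2)^2) with (x^2/4) in L1 by field. nra.
Qed.

Lemma core (c lam : nat -> R) ps Sc (g : R -> R) t0 j L (Q : nat) eps l B :
  (forall k, 0 <= c k) -> (forall k, 0 < lam k) -> infinite_sum c Sc ->
  (forall t, infinite_sum (fun k => c k * cos (lam k * t + ps)) (g t)) ->
  0 < L -> lam j * L = 2 * PI * INR Q ->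
  (forall k, k <> j -> lam k <> lam j) ->
  (forall N, sum_f_R0 (fun k => if Nat.eq_dec k j then 0 else c k / (lam k - lam j)^2) N <= B) ->
  0 <= eps ->
  (forall h, 0 < h <= 2 * L -> Rabs (g (t0 + h) - g t0 - l * h) <= eps * h) ->
  c j / 2 <= 2 * eps * L + 6 * B / L^2.
Proof.
  intros Hc Hlam HS Hg HL HQ Hdist HB Heps Hr.
  apply Rle_plus_epsilon. intros tau Htau.
  destruct (HS tau Htau) as [N0 HN0].
  set (N := max N0 j).
  assert (HjN: (j <= N)%nat) by lia.
  assert (HtN: Sc - sum_f_R0 c N < tau).
  { specialize (HN0 N ltac:(lia)). unfold R_dist in HN0. apply Rabs_def2 in HN0. lra. }
  assert (HtN0: 0 <= Sc - sum_f_R0 c N) by (pose proof (partial_le c Sc Hc HS N); lra).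
  set (M := sum_f_R0 lam N).
  assert (HlM: forall k, (k <= N)%nat -> lam k <= M).
  { intros k Hk. apply sum_ge_term; auto. intros i. specialize (Hlam i). lra. }
  destruct (INR_unbounded (L * M)) as [p Hp].
  set (P := INR p + 1).
  assert (HP: 0 < P) by (unfold P; pose proof (pos_INR p); lra).
  set (dl := L / P).
  assert (Hdl: 0 < dl) by (unfold dl; apply Rdiv_lt_0_compat; auto).
  assert (HPdl: P * dl = L) by (unfold dl; field; lra).
  assert (HdlM: forall k, (k <= N)%nat -> 0 < lam k * dl <= 1).
  { intros k Hk. specialize (HlM k Hk). specialize (Hlam k). split. nra.
    assert (dl * M < 1).
    { unfold dl. apply (Rmult_lt_reg_l P); auto. replace (P * (L / P * M)) with (L * M) by (field; lra).
      unfold P. lra. }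
    nra. }
  set (lj := lam j). set (ph := lj * t0 + ps).
  assert (Hlj: 0 < lj * dl <= 1) by (apply HdlM; auto).
  assert (Hs1: sin (lj * dl / 2) <> 0).
  { apply Rgt_not_eq. apply sin_gt_0. lra. pose proof PI_RGT_0. pose proof PI2_1. lra. }
  assert (Hs2: sin ((INR p + 1) * (lj * dl) / 2) = 0).
  { replace ((INR p + 1) * (lj * dl) / 2) with (INR Q * PI). apply sin_INR_PI.
    fold P. replace (P * (lj * dl)/2) with (lj * (P * dl) / 2) by field. rewrite HPdl. unfold lj. rewrite HQ. field. }
  set (G := fun h => g (t0 + h)).
  set (T := Tf p dl lj ph).
  assert (E1: T G = T (fun h => g (t0 + h) - g t0 - l * h)).
  { transitivity (T (fun h => (g (t0 + h) - g t0 - l * h) + (g t0 + l * h))).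
    - apply T_ext. intros. unfold G. ring.
    - unfold T. rewrite T_plus, T_plus, T_scal, T_const, T_lin; auto. ring. }
  assert (B1: Rabs (T G) <= P^2 * (2 * eps * L)).
  { rewrite E1. unfold T. apply T_abs. lra. intros h Hh.
    assert (2 * INR p * dl <= 2 * L) by (rewrite <- HPdl; unfold P; nra).
    destruct (Req_dec h 0) as [E|E].
    - rewrite E, Rplus_0_r. replace (g t0 - g t0 - l * 0) with 0 by ring. rewrite Rabs_R0. nra.
    - eapply Rle_trans. apply Hr. lra. nra. }
  set (u := fun k h => c k * cos (lam k * (t0 + h) + ps)).
  set (tail := fun h => G h - sum_f_R0 (fun k => u k h) N).
  assert (Htail: forall h, Rabs (tail h) <= Sc - sum_f_R0 c N).
  { intros h. unfold tail, G, u. apply (tail_bound (fun k => c k * cos (lam k * (t0 + h) + ps))); auto.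
    intros k. rewrite Rabs_mult, (Rabs_right (c k)) by (apply Rle_ge; auto).
    pose proof (COS_bound (lam k * (t0 + h) + ps)). specialize (Hc k).
    assert (Rabs (cos (lam k * (t0 + h) + ps)) <= 1) by (apply Rabs_le; lra). nra. }
  set (Tk := fun k => T (fun h => cos (lam k * (t0 + h) + ps))).
  assert (E2: T G = sum_f_R0 (fun k => c k * Tk k) N + T tail).
  { transitivity (T (fun h => sum_f_R0 (fun k => u k h) N + tail h)).
    - apply T_ext. intros. unfold tail. ring.
    - unfold T. rewrite T_plus, T_sum. f_equal. apply sum_eq. intros. unfold u, Tk, T. apply T_scal. }
  assert (B2: Rabs (T tail) <= P^2 * (Sc - sum_f_R0 c N)).
  { unfold T. apply T_abs. lra. intros. auto. }
  assert (Tj: Tk j = P^2 / 2).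
  { unfold Tk, T. rewrite T_cos. fold lj.
    replace ((lj - lj) * dl) with 0 by ring. replace (lj * t0 + ps - ph) with 0 by (unfold ph; ring).
    rewrite (DS_zero p ((lj + lj) * dl)).
    - unfold DS. rewrite (DSum_ext _ _ (fun _ _ => 1)). rewrite DSum_const. unfold P. field.
      intros. replace ((INR m1 + INR m2) * 0 + 0) with 0 by ring. apply cos_0.
    - apply Rgt_not_eq. apply sin_gt_0. lra. pose proof PI_RGT_0. pose proof PI2_1. lra.
    - replace ((INR p + 1) * ((lj + lj) * dl) / 2) with (INR (2 * Q) * PI). apply sin_INR_PI.
      rewrite mult_INR. fold P. replace (P * ((lj + lj) * dl) / 2) with (lj * (P * dl)) by field.
      rewrite HPdl. unfold lj. rewrite HQ. simpl. ring. }
  assert (Bk: forall k, (k <= N)%nat -> k <> j -> Rabs (Tk k) <= 6 / (dl^2 * (lam k - lj)^2)).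
  { intros k Hk Hkj. unfold Tk, T. rewrite T_cos.
    pose proof (HdlM k Hk) as Hk1. 
    assert (Hne: lam k - lj <> 0) by (intro; apply (Hdist k Hkj); unfold lj in *; lra).
    assert (Hx1: 0 < Rabs ((lam k - lj) * dl) <= 2).
    { split. apply Rabs_pos_lt. apply Rmult_integral_contrapositive; split; lra.
      apply Rabs_le. split; nra. }
    assert (Hx2: 0 < Rabs ((lam k + lj) * dl) <= 2).
    { rewrite Rabs_right by nra. split; nra. }
    pose proof (DS_bound2 p _ (lam k * t0 + ps - ph) Hx1) as D1.
    pose proof (DS_bound2 p _ (lam k * t0 + ps + ph) Hx2) as D2.
    set (x1 := (lam k - lj) * dl) in *. set (x2 := (lam k + lj) * dl) in *.
    assert (Hx1s: 0 < x1^2) by (unfold x1; rewrite <- Rsqr_pow2; apply Rsqr_pos_lt; apply Rmult_integral_contrapositive; split; lra).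
    assert (Hx12: x1^2 <= x2^2).
    { unfold x1, x2. assert (0 < lam k) by auto. 
      replace (((lam k + lj) * dl)^2 - ((lam k - lj) * dl)^2) with (4 * (lam k * dl) * (lj * dl)) by ring.
      nra. }
    assert (144 / (25 * x2^2) <= 144 / (25 * x1^2)).
    { unfold Rdiv. apply Rmult_le_compat_l. lra. apply Rinv_le_contravar; nra. }
    replace (dl^2 * (lam k - lj)^2) with (x1^2) by (unfold x1; ring).
    unfold Rdiv at 1. rewrite Rabs_mult, (Rabs_right (/2)) by lra.
    pose proof (Rabs_triang (DS p x1 (lam k * t0 + ps - ph)) (DS p x2 (lam k * t0 + ps + ph))).
    assert (144 / (25 * x1^2) <= 6 / x1^2).
    { unfold Rdiv. rewrite Rinv_mult. 
      assert (0 < / x1^2) by (apply Rinv_0_lt_compat; auto). lra. }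
    lra. }
  assert (B3: Rabs (sum_f_R0 (fun k => if Nat.eq_dec k j then 0 else c k * Tk k) N) <= 6 / dl^2 * B).
  { eapply Rle_trans. apply Rsum_abs.
    apply Rle_trans with (sum_f_R0 (fun k => 6 / dl^2 * (if Nat.eq_dec k j then 0 else c k / (lam k - lam j)^2)) N).
    - apply sum_Rle. intros k Hk. destruct (Nat.eq_dec k j).
      + rewrite Rabs_R0. lra.
      + rewrite Rabs_mult, (Rabs_right (c k)) by (apply Rle_ge; auto).
        specialize (Bk k Hk n). fold lj.
        assert (Hne: lam k - lj <> 0) by (intro; apply (Hdist k n); unfold lj in *; lra).
        replace (6 / dl ^ 2 * (c k / (lam k - lj) ^ 2)) with (c k * (6 / (dl ^ 2 * (lam k - lj) ^ 2))) by (field; split; lra).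
        apply Rmult_le_compat_l; auto.
    - replace (sum_f_R0 (fun k => 6 / dl^2 * (if Nat.eq_dec k j then 0 else c k / (lam k - lam j)^2)) N)
        with (6 / dl^2 * sum_f_R0 (fun k => if Nat.eq_dec k j then 0 else c k / (lam k - lam j)^2) N)
        by (rewrite scal_sum; apply sum_eq; intros; ring).
      apply Rmult_le_compat_l.
      + unfold Rdiv. apply Rmult_le_pos. lra. left. apply Rinv_0_lt_compat. nra.
      + auto. }
  rewrite (sum_split_j _ j N HjN) in E2. rewrite Tj in E2.
  assert (Hdl2: 6 / dl^2 * B = P^2 * (6 * B / L^2)) by (rewrite <- HPdl; field; try split; lra).
  rewrite Hdl2 in B3.
  assert (Main: P^2 * (c j / 2) <= P^2 * (2 * eps * L + 6 * B / L ^ 2 + tau)).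
  { remember (sum_f_R0 (fun k => if Nat.eq_dec k j then 0 else c k * Tk k) N) as Z.
    clear HeqZ.
    assert (c j * (P^2/2) = T G - Z - T tail) by lra.
    apply Rabs_le_between in B1. apply Rabs_le_between in B2. apply Rabs_le_between in B3.
    assert (0 < P^2) by nra. nra. }
  apply Rmult_le_reg_l with (P^2). nra. auto.
Qed.

Lemma ln_ge u : 0 < u -> 1 - / u <= ln u.
Proof.
  intros H. pose proof (exp_ineq1_le (ln (/ u))). rewrite exp_ln in H0 by (apply Rinv_0_lt_compat; auto).
  rewrite ln_Rinv in H0 by auto. lra.
Qed.

Lemma ln_le_mono x y : 0 < x -> x <= y -> ln x <= ln y.
Proof. intros H1 H2. destruct H2. left. apply ln_increasing; auto. subst; lra. Qed.

Lemma Rpower_pos x p : 0 < Rpower x p.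
Proof. unfold Rpower. apply exp_pos. Qed.

Lemma jj_ge n : 2 <= jj n.
Proof. unfold jj. rewrite plus_INR. pose proof (pos_INR n). simpl. lra. Qed.

Lemma jj_diff k j : jj k - jj j = INR k - INR j.
Proof. unfold jj. rewrite !plus_INR. ring. Qed.

Lemma jj_S n : jj (S n) = jj n + 1.
Proof. unfold jj. rewrite !plus_INR, S_INR. ring. Qed.

Lemma ln2_pos : 0 < ln 2.
Proof. pose proof ln_lt_2. lra. Qed.

Lemma ell_pos n : 0 < ln (jj n).
Proof. pose proof ln2_pos. pose proof (ln_le_mono 2 (jj n) ltac:(lra) (jj_ge n)). lra. Qed.

Lemma ell_ge1 n : (1 <= n)%nat -> 1 <= ln (jj n).
Proof.
  intros H. assert (3 <= jj n).
  { unfold jj. rewrite plus_INR. apply le_INR in H. simpl in *. lra. }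
  pose proof exp_le_3. rewrite <- (ln_exp 1). apply ln_le_mono. apply exp_pos. lra.
Qed.

Lemma ell_mono k j : (j <= k)%nat -> ln (jj j) <= ln (jj k).
Proof.
  intros H. apply ln_le_mono. pose proof (jj_ge j); lra.
  pose proof (jj_diff k j). apply le_INR in H. lra.
Qed.

Section Conc.
Variables a b : R.
Hypothesis ha : 1 < a.
Hypothesis hab : a <= b.

Definition cc n := / (jj n * Rpower (ln (jj n)) a).
Definition lam n := jj n ^ 2 * Rpower (ln (jj n)) b.

Lemma cc_pos n : 0 < cc n.
Proof.
  unfold cc. apply Rinv_0_lt_compat. apply Rmult_lt_0_compat. pose proof (jj_ge n); lra. apply Rpower_pos.
Qed.

Lemma lam_pos n : 0 < lam n.
Proof.
  unfold lam. apply Rmult_lt_0_compat. pose proof (jj_ge n); nra. apply Rpower_pos.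
Qed.

Lemma re_term_eq t n : re_term a b t n = cc n * cos (lam n * t + 0).
Proof.
  unfold re_term, cc, lam. rewrite Rplus_0_r. unfold Rdiv. rewrite Rmult_comm. f_equal. f_equal. ring.
Qed.

Lemma im_term_eq t n : im_term a b t n = cc n * cos (lam n * t + - (PI/2)).
Proof.
  unfold im_term, cc, lam. unfold Rdiv. rewrite Rmult_comm. f_equal.
  rewrite <- cos_neg. rewrite <- cos_shift. f_equal. field.
Qed.

Lemma cc_tele n : cc (S n) <= (Rpower (ln (jj n)) (1 - a) - Rpower (ln (jj (S n))) (1 - a)) / (a - 1).
Proof.
  set (X := jj (S n)). set (y := ln X). set (z := ln (jj n)).
  assert (HX: 3 <= X) by (unfold X; rewrite jj_S; pose proof (jj_ge n); lra).
  assert (Hz: 0 < z) by apply ell_pos.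
  assert (Hy: 0 < y) by apply ell_pos.
  assert (Hyz: 1 / X <= y - z).
  { unfold y, z. 
    pose proof (ln_ge (X / (X - 1)) ltac:(apply Rdiv_lt_0_compat; lra)).
    unfold Rdiv in H. rewrite ln_mult, ln_Rinv in H by (try apply Rinv_0_lt_compat; lra).
    replace (jj n) with (X - 1) by (unfold X; rewrite jj_S; ring).
    replace (/ (X * / (X - 1))) with ((X - 1) / X) in H by (field; lra).
    replace (1 - (X - 1) / X) with (1 / X) in H by (field; lra). lra. }
  assert (Hzy: z < y).
  { assert (0 < 1 / X) by (apply Rdiv_lt_0_compat; lra). lra. }
  assert (Hlog: 1 - z / y <= ln y - ln z).
  { pose proof (ln_ge (y / z) ltac:(apply Rdiv_lt_0_compat; lra)).
    unfold Rdiv in H. rewrite ln_mult, ln_Rinv in H by (try apply Rinv_0_lt_compat; lra).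
    replace (/ (y * / z)) with (z / y) in H by (field; lra). lra. }
  unfold Rpower. fold z y.
  set (A := ln z) in *. set (Bv := ln y) in *.
  assert (E1: exp ((1 - a) * A) = exp ((1 - a) * Bv) * exp ((a - 1) * (Bv - A))).
  { rewrite <- exp_plus. f_equal. ring. }
  pose proof (exp_ineq1_le ((a - 1) * (Bv - A))).
  assert (E2: exp ((1 - a) * Bv) * exp (a * Bv) = y).
  { rewrite <- exp_plus. replace ((1 - a) * Bv + a * Bv) with Bv by ring. unfold Bv. apply exp_ln; auto. }
  unfold cc. fold X. unfold Rpower. fold y. fold Bv.
  set (E := exp ((1 - a) * Bv)) in *. set (F := exp (a * Bv)) in *.
  assert (HE: 0 < E) by apply exp_pos. assert (HF: 0 < F) by apply exp_pos.
  rewrite E1.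
  apply Rle_trans with (E * ((a - 1) * (Bv - A)) / (a - 1)).
  2:{ unfold Rdiv. apply Rmult_le_compat_r. left; apply Rinv_0_lt_compat; lra. nra. }
  replace (E * ((a - 1) * (Bv - A)) / (a - 1)) with (E * (Bv - A)) by (field; lra).
  apply Rle_trans with (E * ((y - z) / y)).
  2:{ apply Rmult_le_compat_l. lra. replace ((y - z) / y) with (1 - z / y) by (field; lra). lra. }
  apply Rle_trans with (E * (1 / X / y)).
  2:{ apply Rmult_le_compat_l. lra. unfold Rdiv. apply Rmult_le_compat_r. left; apply Rinv_0_lt_compat; lra. lra. }
  right. rewrite <- E2. field. repeat split; lra.
Qed.

Definition vv n := Rpower (ln (jj n)) (1 - a) / (a - 1).

Lemma cc_conv : exists S, infinite_sum cc S.
Proof.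
  assert (Hb: forall n, sum_f_R0 cc (S n) <= cc 0 + vv 0 - vv (S n)).
  { induction n.
    - simpl. pose proof (cc_tele 0). unfold vv in *. unfold Rdiv in *. 
      unfold Rdiv in H. lra.
    - rewrite tech5. pose proof (cc_tele (S n)). unfold vv in *. unfold Rdiv in *. lra. }
  assert (Hv: forall n, 0 <= vv n).
  { intros. unfold vv. unfold Rdiv. apply Rmult_le_pos. left; apply Rpower_pos. left; apply Rinv_0_lt_compat; lra. }
  destruct (growing_cv (fun n => sum_f_R0 cc n)) as [l Hl].
  - intros n. simpl. pose proof (cc_pos (S n)). lra.
  - exists (cc 0 + vv 0). intros x [n Hn]. rewrite Hn. destruct n.
    + simpl. pose proof (Hv 0%nat). lra.
    + specialize (Hb n). specialize (Hv (S n)). lra.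
  - exists l. exact Hl.
Qed.

End Conc.

Lemma exp_le_mono x y : x <= y -> exp x <= exp y.
Proof. intros [H|H]. left; apply exp_increasing; auto. subst; lra. Qed.

Definition Phi (d : R) := if Rle_dec d 0 then 1 / (1/2 - d) else 4 - 1 / (d - 1/2).

Lemma Phi_range d : (forall n : nat, d <> INR n + 1/2) -> True. Proof. auto. Qed.

Lemma tele_sum (f : nat -> R) N : sum_f_R0 (fun k => f (S k) - f k) N = f (S N) - f 0%nat.
Proof. induction N. simpl. ring. rewrite tech5, IHN. ring. Qed.

Lemma INR_lt_le1 k j : (k < j)%nat -> INR k + 1 <= INR j.
Proof. intros H. rewrite <- S_INR. apply le_INR. lia. Qed.

Lemma w_step k j : (if Nat.eq_dec k j then 0 else / (INR k - INR j)^2) <=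
  Phi (INR (S k) - INR j) - Phi (INR k - INR j).
Proof.
  rewrite S_INR. unfold Phi.
  destruct (Nat.eq_dec k j) as [E|E].
  - subst. replace (INR j + 1 - INR j) with 1 by ring. replace (INR j - INR j) with 0 by ring.
    destruct (Rle_dec 1 0); [lra|]. destruct (Rle_dec 0 0); [|lra]. 
    replace (1 - 1/2) with (/2) by field. replace (1/2 - 0) with (/2) by field.
    unfold Rdiv. rewrite Rinv_inv. lra.
  - destruct (Compare_dec.lt_dec k j) as [H|H].
    + pose proof (INR_lt_le1 _ _ H). set (e := INR j - INR k).
      destruct (Rle_dec (INR k + 1 - INR j) 0); [|lra]. destruct (Rle_dec (INR k - INR j) 0); [|lra].
      replace (INR k + 1 - INR j) with (1 - e) by (unfold e; ring).
      replace (INR k - INR j) with (- e) by (unfold e; ring).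
      assert (1 <= e) by (unfold e; lra).
      replace ((-e)^2) with (e^2) by ring.
      replace (1 / (1/2 - (1 - e)) - 1 / (1/2 - - e)) with (/ (e^2 - /4)) by (field; repeat split; nra).
      apply Rinv_le_contravar; nra.
    + assert (j < k)%nat by lia. pose proof (INR_lt_le1 _ _ H0). set (e := INR k - INR j).
      replace (INR k + 1 - INR j) with (e + 1) by (unfold e; ring). fold e.
      assert (1 <= e) by (unfold e; lra).
      destruct (Rle_dec (e + 1) 0); [lra|]. destruct (Rle_dec e 0); [lra|].
      replace (4 - 1 / (e + 1 - 1/2) - (4 - 1 / (e - 1/2))) with (/ (e^2 - /4)) by (field; repeat split; nra).
      apply Rinv_le_contravar; nra.
Qed.

Lemma Phi_bounds d : 0 <= Phi d <= 4 \/ (0 < d < 1).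
Proof.
  unfold Phi. destruct (Rle_dec d 0).
  - left. split. unfold Rdiv; rewrite Rmult_1_l; left; apply Rinv_0_lt_compat; lra.
    apply Rle_trans with 2; [|lra]. unfold Rdiv. rewrite Rmult_1_l.
    replace 2 with (/ / 2) by (rewrite Rinv_inv; auto). apply Rinv_le_contravar; lra.
  - destruct (Rlt_dec d 1). right; lra. left. split.
    + assert (1 / (d - 1/2) <= 2). { unfold Rdiv. rewrite Rmult_1_l.
        replace 2 with (/ / 2) by (rewrite Rinv_inv; auto). apply Rinv_le_contravar; lra. } lra.
    + assert (0 <= 1 / (d - 1/2)) by (unfold Rdiv; rewrite Rmult_1_l; left; apply Rinv_0_lt_compat; lra). lra.
Qed.

Lemma INR_diff_cases k j : INR k - INR j <= 0 \/ 1 <= INR k - INR j.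
Proof.
  destruct (Compare_dec.le_lt_dec k j). left. apply le_INR in l. lra. right. pose proof (INR_lt_le1 _ _ l). lra.
Qed.

Lemma tele_w j N : sum_f_R0 (fun k => if Nat.eq_dec k j then 0 else / (INR k - INR j)^2) N <= 4.
Proof.
  eapply Rle_trans. apply sum_Rle with (Bn := fun k => Phi (INR (S k) - INR j) - Phi (INR k - INR j)).
  intros. apply w_step.
  rewrite (tele_sum (fun k => Phi (INR k - INR j))).
  destruct (Phi_bounds (INR (S N) - INR j)) as [H1|H1].
  2:{ destruct (INR_diff_cases (S N) j); lra. }
  destruct (Phi_bounds (INR 0 - INR j)) as [H2|H2].
  2:{ destruct (INR_diff_cases 0 j); lra. }
  lra.
Qed.

Ltac posA := repeat (apply Rmult_lt_0_compat || apply pow_lt || apply Rinv_0_lt_compat); auto; try lra.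

Section Conc2.
Variables a b : R.
Hypothesis ha : 1 < a.
Hypothesis hab : a <= b.

Definition GG j := jj j * Rpower (ln (jj j)) b.

Lemma Rpower_mono_base u v p : 0 <= p -> 0 < u <= v -> Rpower u p <= Rpower v p.
Proof. intros. apply Rle_Rpower_l; auto. Qed.

Lemma alpha_half Lk Lj : 0 < Lk -> 0 < Lj -> Rpower Lj b / 2 < Rpower Lk b ->
  Rpower Lj a / 2 <= Rpower Lk a.
Proof.
  intros Hk Hj H.
  assert (Hb: 0 < b) by lra.
  assert (E: forall L, Rpower L a = Rpower (Rpower L b) (a / b)).
  { intros. rewrite Rpower_mult. f_equal. field. lra. }
  rewrite !E.
  assert (Hab0: 0 <= a / b <= 1).
  { split. unfold Rdiv. apply Rmult_le_pos; [lra|left; apply Rinv_0_lt_compat; lra].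
    apply (Rmult_le_reg_l b); auto. replace (b * (a / b)) with a by (field; lra). lra. }
  pose proof (Rpower_pos Lj b) as Pj.
  apply Rle_trans with (Rpower (Rpower Lj b / 2) (a / b)).
  2:{ apply Rpower_mono_base. lra. split. lra. lra. }
  change (Rpower Lj b / 2) with (Rpower Lj b * / 2). rewrite <- (Rpower_mult_distr (Rpower Lj b) (/2) (a/b)) by (auto; lra).
  assert (/2 <= Rpower (/2) (a / b)).
  { unfold Rpower. rewrite <- (exp_ln (/2)) at 1 by lra. apply exp_le_mono.
    assert (ln (/2) < 0) by (rewrite ln_Rinv by lra; pose proof ln2_pos; lra). nra. }
  pose proof (Rpower_pos (Rpower Lj b) (a / b)). unfold Rdiv. nra.
Qed.

Lemma gap_point k j : k <> j ->
  cc a k / (lam b k - lam b j)^2 <=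
  16 * cc a j / GG j ^ 2 * / (INR k - INR j)^2 + 4 * cc a k / lam b j ^ 2.
Proof.
  intros Hkj.
  unfold cc, lam, GG.
  set (xk := jj k). set (xj := jj j). set (Lk := ln xk). set (Lj := ln xj).
  set (Ak := Rpower Lk b). set (Aj := Rpower Lj b). set (ak := Rpower Lk a). set (aj := Rpower Lj a).
  assert (Hxk: 2 <= xk) by apply jj_ge. assert (Hxj: 2 <= xj) by apply jj_ge.
  assert (HLk: 0 < Lk) by apply ell_pos. assert (HLj: 0 < Lj) by apply ell_pos.
  assert (HAk: 0 < Ak) by apply Rpower_pos. assert (HAj: 0 < Aj) by apply Rpower_pos.
  assert (Hak: 0 < ak) by apply Rpower_pos. assert (Haj: 0 < aj) by apply Rpower_pos.
  assert (Hd := jj_diff k j). fold xk xj in Hd.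
  assert (T2: 0 <= 4 * / (xk * ak) / (xj^2 * Aj)^2).
  { unfold Rdiv. left. posA. }
  assert (T1: 0 <= 16 * / (xj * aj) / (xj * Aj)^2 * / (INR k - INR j)^2).
  { assert (INR k - INR j <> 0) by (intro; apply Hkj; apply INR_eq; lra).
    assert (0 < (INR k - INR j)^2) by (rewrite <- Rsqr_pow2; apply Rsqr_pos_lt; auto).
    unfold Rdiv. apply Rmult_le_pos; [|left; apply Rinv_0_lt_compat; auto]. left. posA. }
  destruct (Compare_dec.lt_dec j k) as [Hjk|Hjk].
  -
    pose proof (INR_lt_le1 _ _ Hjk) as Hd1. set (d := INR k - INR j) in *.
    assert (Hd1': 1 <= d) by (unfold d; lra).
    assert (HLjk: Lj <= Lk) by (apply ell_mono; lia).
    assert (HA: Aj <= Ak) by (apply Rpower_mono_base; lra).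
    assert (Ha': aj <= ak) by (apply Rpower_mono_base; lra).
    assert (HD: 2 * d * (xj * Aj) <= xk^2 * Ak - xj^2 * Aj).
    { assert (xk^2 * Aj <= xk^2 * Ak) by (apply Rmult_le_compat_l; nra).
      replace (xk^2*Aj - xj^2*Aj) with ((xk - xj) * (xk + xj) * Aj) by ring. 
      assert (2 * d * (xj * Aj) <= (xk - xj) * (xk + xj) * Aj).
      { rewrite Hd. fold d. assert (2 * xj <= xk + xj) by lra. 
        replace (2 * d * (xj * Aj)) with (d * (2 * xj) * Aj) by ring. apply Rmult_le_compat_r. lra.
        apply Rmult_le_compat_l; lra. }
      lra. }
    assert (HG: 0 < xj * Aj) by nra.
    assert (HDp: 0 < xk^2 * Ak - xj^2 * Aj) by nra.
    assert (I1: / (xk^2 * Ak - xj^2 * Aj)^2 <= / (2 * d * (xj * Aj))^2).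
    { apply Rinv_le_contravar. posA. apply pow_incr. split; [nra|auto]. }
    assert (I2: / (xk * ak) <= / (xj * aj)).
    { apply Rinv_le_contravar. nra. apply Rmult_le_compat; lra. }
    apply Rle_trans with (16 * / (xj * aj) / (xj * Aj) ^ 2 * / d ^ 2); [|lra].
    unfold Rdiv. 
    apply Rle_trans with (/ (xj * aj) * / (2 * d * (xj * Aj)) ^ 2).
    + apply Rmult_le_compat; auto; left; posA.
    + replace (/ (2 * d * (xj * Aj)) ^ 2) with (/4 * (/ (xj * Aj)^2 * / d^2)) by (field; split; lra).
      assert (0 < / (xj * aj)) by posA.
      assert (0 < / (xj * Aj)^2 * / d^2) by posA.
      nra.
  - assert (Hkj': (k < j)%nat) by lia.
    pose proof (INR_lt_le1 _ _ Hkj') as Hd1.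
    assert (Hd1': 1 <= xj - xk) by lra.
    assert (HLjk: Lk <= Lj) by (apply ell_mono; lia).
    assert (HA: Ak <= Aj) by (apply Rpower_mono_base; lra).
    replace ((INR k - INR j)^2) with ((xj - xk)^2) by (rewrite <- Hd; ring).
    replace ((xk^2 * Ak - xj^2 * Aj)^2) with ((xj^2 * Aj - xk^2 * Ak)^2) by ring.
    destruct (Rle_dec (xk^2 * Ak) (xj^2 * Aj / 2)) as [Hs|Hs].
    +
      assert (I: / (xj^2 * Aj - xk^2 * Ak)^2 <= 4 * / (xj^2 * Aj)^2).
      { replace (4 * / (xj^2 * Aj)^2) with (/ ((xj^2 * Aj)/2)^2) by (field; repeat split; nra).
        apply Rinv_le_contravar. posA. apply pow_incr. nra. }
      assert (0 < / (xk * ak)) by posA.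
      assert (/ (xk * ak) * / (xj^2 * Aj - xk^2 * Ak)^2 <= / (xk * ak) * (4 * / (xj^2 * Aj)^2))
        by (apply Rmult_le_compat_l; lra).
      replace ((xj - xk)^2) with ((INR k - INR j)^2) by (rewrite <- Hd; ring).
      unfold Rdiv. unfold Rdiv in T1, T2. lra.
    + apply Rnot_le_lt in Hs.
      assert (HAh: Aj / 2 < Ak).
      { assert (xk^2 <= xj^2) by nra. nra. }
      assert (Hxh: xj^2 / 2 < xk^2) by nra.
      assert (Hxh2: xj / 2 <= xk) by nra.
      assert (Hah: aj / 2 <= ak) by (apply alpha_half; auto).
      assert (I2: / (xk * ak) <= 4 * / (xj * aj)).
      { replace (4 * / (xj * aj)) with (/ ((xj/2) * (aj/2))) by (field; repeat split; nra).
        apply Rinv_le_contravar. nra. apply Rmult_le_compat; lra. }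
      assert (HD: (xj - xk) * (xj * Aj) / 2 <= xj^2 * Aj - xk^2 * Ak).
      { assert (xj^2 * Ak <= xj^2 * Aj) by (apply Rmult_le_compat_l; nra).
        assert (xj^2*Ak - xk^2*Ak = (xj - xk) * (xj + xk) * Ak) by ring.
        assert ((xj - xk) * (xj * Aj) / 2 <= (xj - xk) * (xj + xk) * Ak).
        { assert (xj * Aj / 2 <= (xj + xk) * Ak) by nra. 
          replace ((xj - xk) * (xj * Aj) / 2) with ((xj - xk) * (xj * Aj / 2)) by field.
          replace ((xj - xk) * (xj + xk) * Ak) with ((xj - xk) * ((xj + xk) * Ak)) by ring.
          apply Rmult_le_compat_l; lra. }
        nra. }
      assert (HD0: 0 < (xj - xk) * (xj * Aj) / 2) by posA.
      assert (I1: / (xj^2 * Aj - xk^2 * Ak)^2 <= 4 * / (xj * Aj)^2 * / (xj - xk)^2).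
      { replace (4 * / (xj * Aj)^2 * / (xj - xk)^2) with (/ ((xj - xk) * (xj * Aj) / 2)^2) by (field; split; lra).
        apply Rinv_le_contravar. posA. apply pow_incr. split; lra. }
      assert (HDp: 0 < xj^2 * Aj - xk^2 * Ak) by lra.
      assert (0 < / (xj * aj)) by posA.
      assert (HH: / (xk * ak) * / (xj ^ 2 * Aj - xk ^ 2 * Ak) ^ 2 <= (4 * / (xj * aj)) * (4 * / (xj * Aj) ^ 2 * / (xj - xk) ^ 2)).
      { apply Rmult_le_compat; auto; left; posA. }
      replace ((4 * / (xj * aj)) * (4 * / (xj * Aj) ^ 2 * / (xj - xk) ^ 2)) with
        (16 * / (xj * aj) * / (xj * Aj) ^ 2 * / (xj - xk) ^ 2) in HH by ring.
      unfold Rdiv. unfold Rdiv in T2. lra.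
Qed.

End Conc2.

Ltac pos := repeat (apply PI_RGT_0 || apply cc_pos || apply lam_pos || apply Rmult_lt_0_compat || apply pow_lt || apply Rinv_0_lt_compat || apply Rpower_pos); auto; try lra.

Lemma lnpow_bound a x : 1 < a -> 2 <= x -> Rpower (ln x) a <= Rpower (2 * a) a * sqrt x.
Proof.
  intros ha hx.
  set (u := Rpower x (/ (2 * a))).
  assert (Hu: 0 < u) by apply Rpower_pos.
  assert (Hlu: ln u = / (2 * a) * ln x) by (unfold u; apply ln_Rpower).
  assert (H1: ln u <= u) by (pose proof (exp_ineq1_le (ln u)); rewrite exp_ln in H by auto; lra).
  assert (Hlx: 0 < ln x) by (pose proof ln2_pos; pose proof (ln_le_mono 2 x ltac:(lra) hx); lra).
  assert (H2: ln x <= 2 * a * u).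
  { replace (ln x) with (2 * a * ln u) by (rewrite Hlu; field; lra). nra. }
  apply Rle_trans with (Rpower (2 * a * u) a).
  - apply Rpower_mono_base; lra.
  - rewrite <- Rpower_mult_distr by lra. apply Rmult_le_compat_l. left; apply Rpower_pos.
    unfold u. rewrite Rpower_mult. rewrite <- Rpower_sqrt by lra. right. f_equal. field. lra.
Qed.

Lemma ell_ge1' x : 3 <= x -> 1 <= ln x.
Proof. intros. pose proof exp_le_3. rewrite <- (ln_exp 1). apply ln_le_mono. apply exp_pos. lra. Qed.

Section Conc3.
Variables a b : R.
Hypothesis ha : 1 < a.
Hypothesis hab : a <= b.

Lemma gap_sum j Sc : infinite_sum (cc a) Sc -> forall N,
  sum_f_R0 (fun k => if Nat.eq_dec k j then 0 else cc a k / (lam b k - lam b j)^2) N <=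
  64 * cc a j / GG b j ^ 2 + 4 * Sc / lam b j ^ 2.
Proof.
  intros HS N.
  set (C := 16 * cc a j / GG b j ^ 2).
  assert (HC: 0 <= C).
  { unfold C, GG. unfold Rdiv. left. pose proof (cc_pos a j). pose proof (jj_ge j).
    pose proof (Rpower_pos (ln (jj j)) b). pos. }
  eapply Rle_trans. apply sum_Rle with
    (Bn := fun k => (if Nat.eq_dec k j then 0 else C * / (INR k - INR j)^2) + 4 / lam b j ^ 2 * cc a k).
  { intros k _. destruct (Nat.eq_dec k j).
    - assert (0 <= 4 / lam b j ^ 2 * cc a k).
      { pose proof (cc_pos a k). pose proof (lam_pos b j). left. unfold Rdiv. pos. }
      lra.
    - pose proof (gap_point a b ha hab k j n). fold C in H. unfold Rdiv in *. lra. }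
  rewrite sum_plus.
  assert (E1: sum_f_R0 (fun k => if Nat.eq_dec k j then 0 else C * / (INR k - INR j)^2) N =
              C * sum_f_R0 (fun k => if Nat.eq_dec k j then 0 else / (INR k - INR j)^2) N).
  { rewrite scal_sum. apply sum_eq. intros. destruct (Nat.eq_dec i j); ring. }
  assert (E2: sum_f_R0 (fun k => 4 / lam b j ^ 2 * cc a k) N = 4 / lam b j ^ 2 * sum_f_R0 (cc a) N).
  { rewrite scal_sum. apply sum_eq. intros. ring. }
  rewrite E1, E2.
  pose proof (tele_w j N).
  pose proof (partial_le (cc a) Sc (fun k => Rlt_le _ _ (cc_pos a k)) HS N).
  assert (0 <= 4 / lam b j ^ 2) by (pose proof (lam_pos b j); left; unfold Rdiv; pos).
  apply Rplus_le_compat.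
  - unfold C. apply Rle_trans with (16 * cc a j / GG b j ^ 2 * 4). apply Rmult_le_compat_l; [exact HC|assumption].
    unfold Rdiv. right. ring.
  - unfold Rdiv at 2. replace (4 * Sc * / lam b j ^ 2) with (4 / lam b j ^ 2 * Sc) by (unfold Rdiv; ring).
    apply Rmult_le_compat_l; auto.
Qed.

Lemma lam_strict k j : (k < j)%nat -> lam b k < lam b j.
Proof.
  intros H. unfold lam.
  pose proof (INR_lt_le1 _ _ H). pose proof (jj_diff j k). pose proof (jj_ge k).
  assert (ln (jj k) <= ln (jj j)) by (apply ell_mono; lia).
  assert (Rpower (ln (jj k)) b <= Rpower (ln (jj j)) b) by (apply Rpower_mono_base; [lra|split; [apply ell_pos|auto]]).
  pose proof (Rpower_pos (ln (jj k)) b).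
  assert (jj k ^ 2 < jj j ^ 2) by nra. nra.
Qed.

Lemma key ps (g : R -> R) (Hg : forall t, infinite_sum (fun k => cc a k * cos (lam b k * t + ps)) (g t))
  t0 l eps rho : 0 < rho -> 0 <= eps ->
  (forall h, 0 < h < rho -> Rabs (g (t0 + h) - g t0 - l * h) <= eps * h) ->
  exists j0, forall j, (j0 <= j)%nat -> Rpower (ln (jj j)) (b - a) <= 512 * PI * eps.
Proof.
  intros Hrho Heps Hr.
  destruct (cc_conv a ha) as [Sc HS].
  assert (HSc: 0 <= Sc).
  { pose proof (partial_le (cc a) Sc (fun k => Rlt_le _ _ (cc_pos a k)) HS 0). simpl in H.
    pose proof (cc_pos a 0). lra. }
  set (K := Rmax 3 (Rmax ((Sc * Rpower (2 * a) a / 192)^2) (128 * PI / rho))).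
  destruct (INR_unbounded K) as [j0 Hj0].
  exists j0. intros j Hj.
  set (x := jj j).
  assert (Hx: K < x).
  { unfold x, jj. rewrite plus_INR. apply le_INR in Hj. simpl. lra. }
  assert (Hx3: 3 < x) by (pose proof (Rmax_l 3 (Rmax ((Sc * Rpower (2 * a) a / 192)^2) (128 * PI / rho))); fold K in H; lra).
  assert (Hx1: (Sc * Rpower (2 * a) a / 192)^2 < x).
  { pose proof (Rmax_r 3 (Rmax ((Sc * Rpower (2 * a) a / 192)^2) (128 * PI / rho))).
    pose proof (Rmax_l ((Sc * Rpower (2 * a) a / 192)^2) (128 * PI / rho)). fold K in H. lra. }
  assert (Hx2: 128 * PI / rho < x).
  { pose proof (Rmax_r 3 (Rmax ((Sc * Rpower (2 * a) a / 192)^2) (128 * PI / rho))).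
    pose proof (Rmax_r ((Sc * Rpower (2 * a) a / 192)^2) (128 * PI / rho)). fold K in H. lra. }
  set (ell := ln x).
  assert (Hell: 1 <= ell) by (apply ell_ge1'; lra).
  set (A := Rpower ell b). set (al := Rpower ell a).
  assert (HA1: 1 <= A).
  { unfold A. rewrite <- (Rpower_O ell) by lra. apply Rle_Rpower; lra. }
  assert (Hal: 0 < al) by apply Rpower_pos.
  set (G := x * A).
  assert (HG: x <= G) by (unfold G; nra).
  set (L := 64 * PI / G).
  pose proof PI_RGT_0 as Hpi. pose proof PI2_3_2 as Hpi3.
  assert (HG0: 0 < G).
  { apply Rlt_le_trans with x. lra. exact HG. }
  assert (HL: 0 < L).
  { unfold L. pos. }
  assert (HQ: lam b j * L = 2 * PI * INR (32 * (j + 2))).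
  { rewrite mult_INR. fold (jj j). fold x. unfold L, G, lam. fold x ell A. simpl INR. field. lra. }
  assert (Hdist: forall k, k <> j -> lam b k <> lam b j).
  { intros k Hk. destruct (Compare_dec.lt_dec k j).
    - pose proof (lam_strict k j l0). lra.
    - assert (j < k)%nat by lia. pose proof (lam_strict j k H). lra. }
  assert (H2L: 2 * L < rho).
  { unfold L. apply Rle_lt_trans with (128 * PI / x).
    - unfold Rdiv. replace (2 * (64 * PI * / G)) with (128 * PI * / G) by ring.
      apply Rmult_le_compat_l. lra. apply Rinv_le_contravar; lra.
    - apply (Rmult_lt_reg_r x). lra.
      replace (128 * PI / x * x) with (128 * PI) by (field; lra).
      apply (Rmult_lt_reg_r (/ rho)). pos.
      replace (128 * PI * / rho) with (128 * PI / rho) by reflexivity.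
      replace (rho * x * / rho) with x by (field; lra). lra. }
  set (B := 64 * cc a j / GG b j ^ 2 + 4 * Sc / lam b j ^ 2).
  assert (Hc := core (cc a) (lam b) ps Sc g t0 j L (32 * (j + 2)) eps l B
    (fun k => Rlt_le _ _ (cc_pos a k)) (lam_pos b) HS Hg HL HQ Hdist (gap_sum j Sc HS) Heps
    (fun h Hh => Hr h ltac:(lra))).
  assert (EG: GG b j = G) by reflexivity.
  assert (El: lam b j = x^2 * A) by reflexivity.
  assert (Ec: cc a j = / (x * al)) by reflexivity.
  unfold B in Hc. rewrite EG, El, Ec in Hc.
  set (c := / (x * al)) in *.
  assert (Hcpos: 0 < c) by (unfold c; pos).
  assert (HSal: Sc * al <= 192 * x).
  { pose proof (lnpow_bound a x ha ltac:(lra)) as HB. fold ell al in HB.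
    set (R2 := Rpower (2 * a) a) in *.
    assert (HR2: 0 < R2) by apply Rpower_pos.
    assert (Hq: Sc * R2 / 192 < sqrt x).
    { rewrite <- (sqrt_pow2 (Sc * R2 / 192)). apply sqrt_lt_1_alt. split; [apply pow2_ge_0|auto].
      unfold Rdiv. apply Rmult_le_pos; [apply Rmult_le_pos; lra|lra]. }
    pose proof (sqrt_sqrt x ltac:(lra)). pose proof (sqrt_pos x).
    apply Rle_trans with (Sc * (R2 * sqrt x)). apply Rmult_le_compat_l; lra.
    nra. }
  assert (Hpi9: 9 < PI^2) by nra.
  assert (T1: 6 * (64 * c / G ^ 2 + 4 * Sc / (x ^ 2 * A) ^ 2) / L ^ 2 =
              c * (3 / (32 * PI^2)) + 3 * Sc / (512 * PI^2 * x^2)).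
  { unfold L, G. field. repeat split; lra. }
  rewrite T1 in Hc.
  assert (T2: c * (3 / (32 * PI^2)) <= c / 8).
  { unfold Rdiv. apply Rmult_le_compat_l. lra.
    apply Rle_trans with (3 * / (32 * 9)). apply Rmult_le_compat_l. lra.
    apply Rinv_le_contravar; lra. lra. }
  assert (T3: 3 * Sc / (512 * PI^2 * x^2) <= c / 8).
  { unfold c. apply Rle_trans with (3 * Sc / (512 * 9 * x^2)).
    - unfold Rdiv. apply Rmult_le_compat_l. lra. apply Rinv_le_contravar. pos. 
      assert (0 < x^2) by pos. nra.
    - replace (3 * Sc / (512 * 9 * x ^ 2)) with (Sc * al / (1536 * x^2 * al)) by (field; split; lra).
      replace (/ (x * al) / 8) with (192 * x / (1536 * x^2 * al)) by (field; split; lra).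
      unfold Rdiv. apply Rmult_le_compat_r. left; pos. auto. }
  assert (Hfin: c * G <= 512 * PI * eps).
  { assert (c / 4 <= 2 * eps * L) by lra. unfold L in H.
    apply (Rmult_le_reg_r (/ G)). pos.
    replace (c * G * / G) with c by (field; lra).
    replace (512 * PI * eps * / G) with (4 * (2 * eps * (64 * PI / G))) by (field; lra). lra. }
  replace (Rpower ell (b - a)) with (c * G). auto.
  unfold c, G, A, al.
  replace (Rpower ell b) with (Rpower ell (b - a) * Rpower ell a) by (rewrite <- Rpower_plus; f_equal; ring).
  field. split; [apply Rgt_not_eq, Rpower_pos|lra].
Qed.

End Conc3.

Lemma series_sum_spec u : (exists l, infinite_sum u l) -> infinite_sum u (series_sum u).
Proof. intros H. unfold series_sum. apply (epsilon_spec (inhabits 0) (fun l => infinite_sum u l) H). Qed.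

Lemma abs_conv (u c : nat -> R) S : (forall k, Rabs (u k) <= c k) -> infinite_sum c S ->
  exists l, infinite_sum u l.
Proof.
  intros H HS.
  assert (Hc: {l | Un_cv (fun N => sum_f_R0 (fun k => Rabs (u k)) N) l}).
  { apply Rseries_CV_comp with c. intros; split; [apply Rabs_pos|auto]. exists S. exact HS. }
  apply CV_Cauchy in Hc. apply cauchy_abs in Hc. apply R_complete in Hc. destruct Hc as [l Hl].
  exists l. exact Hl.
Qed.

Lemma cos_term_bound c l ps t : 0 <= c -> Rabs (c * cos (l * t + ps)) <= c.
Proof.
  intros Hc. rewrite Rabs_mult, Rabs_right by lra. pose proof (COS_bound (l * t + ps)).
  assert (Rabs (cos (l * t + ps)) <= 1) by (apply Rabs_le; lra). nra.
Qed.

Lemma partial_cont (u : R -> nat -> R) N x : (forall k, continuity_pt (fun t => u t k) x) ->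
  continuity_pt (fun t => sum_f_R0 (u t) N) x.
Proof.
  intros H. induction N.
  - simpl. apply H.
  - exact (continuity_pt_plus _ _ x IHN (H (S N))).
Qed.

Lemma series_cont (u : R -> nat -> R) (c : nat -> R) S g :
  (forall k t, Rabs (u t k) <= c k) -> (forall k x, continuity_pt (fun t => u t k) x) ->
  infinite_sum c S -> (forall t, infinite_sum (u t) (g t)) -> continuity g.
Proof.
  intros Hb Hc HS Hg x eps Heps.
  destruct (HS (eps/3) ltac:(lra)) as [N HN].
  assert (Ht: forall t, Rabs (g t - sum_f_R0 (u t) N) <= S - sum_f_R0 c N).
  { intros t. apply (tail_bound (u t) c); auto. }
  assert (HtN: S - sum_f_R0 c N < eps/3).
  { specialize (HN N (le_n _)). unfold R_dist in HN. apply Rabs_def2 in HN. lra. }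
  destruct (partial_cont u N x (fun k => Hc k x) (eps/3) ltac:(lra)) as [alp [Halp Hp]].
  exists alp. split; auto. intros y [Hy Hd]. specialize (Hp y (conj Hy Hd)).
  simpl in *. unfold R_dist in *.
  pose proof (Ht x). pose proof (Ht y).
  apply Rabs_def2 in Hp. apply Rabs_le_between in H. apply Rabs_le_between in H0.
  apply Rabs_def1; lra.
Qed.

Lemma Cmod_le z : Cmod z <= Rabs (fst z) + Rabs (snd z).
Proof.
  unfold Cmod. rewrite <- (sqrt_pow2 (Rabs (fst z) + Rabs (snd z))) by (pose proof (Rabs_pos (fst z)); pose proof (Rabs_pos (snd z)); lra).
  apply sqrt_le_1_alt. 
  pose proof (Rabs_pos (fst z)). pose proof (Rabs_pos (snd z)).
  rewrite <- (pow2_abs (fst z)), <- (pow2_abs (snd z)). nra.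
Qed.

Lemma Cmod_fst z : Rabs (fst z) <= Cmod z.
Proof.
  unfold Cmod. rewrite <- (sqrt_pow2 (Rabs (fst z))) by apply Rabs_pos.
  apply sqrt_le_1_alt. rewrite pow2_abs. pose proof (pow2_ge_0 (snd z)). lra.
Qed.

Lemma Cmod_snd z : Rabs (snd z) <= Cmod z.
Proof.
  unfold Cmod. rewrite <- (sqrt_pow2 (Rabs (snd z))) by apply Rabs_pos.
  apply sqrt_le_1_alt. rewrite pow2_abs. pose proof (pow2_ge_0 (fst z)). lra.
Qed.

Section Final.
Variables a b : R.
Hypothesis ha : 1 < a.
Hypothesis hab : a <= b.

Lemma g_props ps (g : R -> R) (Hg : forall t, infinite_sum (fun k => cc a k * cos (lam b k * t + ps)) (g t)) :
  continuity g /\ bounded_R g /\ (forall t, ~ exists l, derivable_pt_lim g t l) /\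
  (a < b -> forall t, ~ lipschitz_at_R g t).
Proof.
  destruct (cc_conv a ha) as [Sc HS].
  assert (Hb: forall k t, Rabs (cc a k * cos (lam b k * t + ps)) <= cc a k).
  { intros. apply cos_term_bound. left; apply cc_pos. }
  split; [|split; [|split]].
  - apply (series_cont (fun t k => cc a k * cos (lam b k * t + ps)) (cc a) Sc g); auto.
    intros. reg.
  - exists Sc. intros t. pose proof (tail_bound _ _ _ _ (fun k => Hb k t) (Hg t) HS 0). simpl in H.
    pose proof (Hb 0%nat t). 
    apply Rabs_le_between in H. apply Rabs_le_between in H0. apply Rabs_le. lra.
  - intros t [l Hl].
    set (e0 := / (1024 * PI)).
    pose proof PI_RGT_0.
    assert (He0: 0 < e0) by (unfold e0; apply Rinv_0_lt_compat; lra).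
    destruct (Hl e0 He0) as [del Hdel].
    assert (Hr: forall h, 0 < h < del -> Rabs (g (t + h) - g t - l * h) <= e0 * h).
    { intros h Hh. assert (h <> 0) by lra.
      assert (Rabs h < del) by (rewrite Rabs_right; lra).
      specialize (Hdel h H0 H1).
      replace (g (t + h) - g t - l * h) with (h * ((g (t + h) - g t) / h - l)) by (field; auto).
      rewrite Rabs_mult, Rabs_right by lra. rewrite Rmult_comm. apply Rmult_le_compat_r; lra. }
    destruct (key a b ha hab ps g Hg t l e0 del (cond_pos del) (Rlt_le _ _ He0) Hr) as [j0 Hj0].
    specialize (Hj0 (S j0) (le_S _ _ (le_n _))).
    assert (1 <= ln (jj (S j0))) by (apply ell_ge1; lia).
    assert (1 <= Rpower (ln (jj (S j0))) (b - a)).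
    { rewrite <- (Rpower_O (ln (jj (S j0)))) by lra. apply Rle_Rpower; lra. }
    assert (512 * PI * e0 = /2) by (unfold e0; field; lra). lra.
  - intros Hab t [L0 [eta [HL0 [Heta HL]]]].
    assert (Hr: forall h, 0 < h < eta -> Rabs (g (t + h) - g t - 0 * h) <= L0 * h).
    { intros h Hh. replace (g (t + h) - g t - 0 * h) with (g (t + h) - g t) by ring.
      replace h with (Rabs (t + h - t)) at 2 by (replace (t + h - t) with h by ring; apply Rabs_right; lra).
      apply HL. lra. }
    destruct (key a b ha hab ps g Hg t 0 L0 eta Heta (Rlt_le _ _ HL0) Hr) as [j0 Hj0].
    set (Y := Rpower (512 * PI * L0 + 1) (/ (b - a))).
    pose proof PI_RGT_0.
    assert (HY: 0 < Y) by apply Rpower_pos.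
    destruct (INR_unbounded (exp Y)) as [m Hm].
    set (j := Nat.max j0 m).
    specialize (Hj0 j ltac:(lia)).
    assert (Hj: exp Y < jj j).
    { unfold jj. rewrite plus_INR. assert (INR m <= INR j) by (apply le_INR; lia). simpl. lra. }
    assert (HlY: Y <= ln (jj j)).
    { rewrite <- (ln_exp Y). left. apply ln_increasing. apply exp_pos. auto. }
    assert (Rpower Y (b - a) <= Rpower (ln (jj j)) (b - a)) by (apply Rle_Rpower_l; lra).
    assert (Rpower Y (b - a) = 512 * PI * L0 + 1).
    { unfold Y. rewrite Rpower_mult. replace (/ (b - a) * (b - a)) with 1 by (field; lra).
      apply Rpower_1. nra. }
    lra.
Qed.

Lemma HRe : forall t, infinite_sum (fun k => cc a k * cos (lam b k * t + 0)) (ReF1 a b t).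
Proof.
  intros t. destruct (cc_conv a ha) as [Sc HS].
  assert (H: exists l, infinite_sum (re_term a b t) l).
  { apply (abs_conv _ (cc a) Sc); auto. intros k. rewrite re_term_eq. apply cos_term_bound. left; apply cc_pos. }
  apply series_sum_spec in H. eapply inf_sum_ext; [|exact H]. intros N. apply sum_eq. intros. apply re_term_eq.
Qed.

Lemma HIm : forall t, infinite_sum (fun k => cc a k * cos (lam b k * t + - (PI/2))) (ImF1 a b t).
Proof.
  intros t. destruct (cc_conv a ha) as [Sc HS].
  assert (H: exists l, infinite_sum (im_term a b t) l).
  { apply (abs_conv _ (cc a) Sc); auto. intros k. rewrite im_term_eq. apply cos_term_bound. left; apply cc_pos. }
  apply series_sum_spec in H. eapply inf_sum_ext; [|exact H]. intros N. apply sum_eq. intros. apply im_term_eq.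
Qed.

End Final.

Theorem mainTheorem11 (a b : R) (ha : 1 < a) (hab : a <= b) :
  (* the defining series converge for every t *)
  (forall t, (exists l, infinite_sum (re_term a b t) l) /\
             (exists l, infinite_sum (im_term a b t) l)) /\
  (* continuity *)
  (forall t, continuous_C (F1 a b) t) /\
  continuity (ReF1 a b) /\ continuity (ImF1 a b) /\
  (* boundedness *)
  bounded_C (F1 a b) /\ bounded_R (ReF1 a b) /\ bounded_R (ImF1 a b) /\
  (* nowhere differentiable *)
  (forall t, ~ differentiable_C (F1 a b) t) /\
  (forall t, ~ exists l, derivable_pt_lim (ReF1 a b) t l) /\
  (forall t, ~ exists l, derivable_pt_lim (ImF1 a b) t l) /\
  (* nowhere Lipschitz when b > a *)
  (a < b ->
     forall t, ~ lipschitz_at_C (F1 a b) t /\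
               ~ lipschitz_at_R (ReF1 a b) t /\
               ~ lipschitz_at_R (ImF1 a b) t).
Proof.
  destruct (g_props a b ha hab 0 (ReF1 a b) (HRe a b ha)) as [CR [BR [DR LR]]].
  destruct (g_props a b ha hab (- (PI/2)) (ImF1 a b) (HIm a b ha)) as [CI [BI [DI LI]]].
  destruct (cc_conv a ha) as [Sc HS].
  split; [|split; [|split; [|split; [|split; [|split; [|split; [|split; [|split; [|split]]]]]]]]].
  - intros t. split.
    + apply (abs_conv _ (cc a) Sc); auto. intros k. rewrite re_term_eq. apply cos_term_bound. left; apply cc_pos.
    + apply (abs_conv _ (cc a) Sc); auto. intros k. rewrite im_term_eq. apply cos_term_bound. left; apply cc_pos.
  - intros t eps Heps.
    destruct (CR t (eps/2) ltac:(lra)) as [d1 [Hd1 H1]].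
    destruct (CI t (eps/2) ltac:(lra)) as [d2 [Hd2 H2]].
    exists (Rmin d1 d2). split. apply Rmin_pos; auto.
    intros t' Ht'.
    destruct (Req_dec t' t) as [E|E].
    + subst. replace (Cmod (Csub (F1 a b t) (F1 a b t))) with 0. lra.
      unfold Cmod, Csub, F1; simpl. rewrite <- sqrt_0. f_equal. ring.
    + assert (A1: Rabs (ReF1 a b t' - ReF1 a b t) < eps/2).
      { apply (H1 t'). split. split; [exact I|auto]. simpl. unfold R_dist. pose proof (Rmin_l d1 d2). lra. }
      assert (A2: Rabs (ImF1 a b t' - ImF1 a b t) < eps/2).
      { apply (H2 t'). split. split; [exact I|auto]. simpl. unfold R_dist. pose proof (Rmin_r d1 d2). lra. }
      eapply Rle_lt_trans. apply Cmod_le. unfold Csub, F1. simpl. lra.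
  - exact CR.
  - exact CI.
  - destruct BR as [M1 HM1]. destruct BI as [M2 HM2]. exists (M1 + M2). intros t.
    eapply Rle_trans. apply Cmod_le. unfold F1. simpl. specialize (HM1 t). specialize (HM2 t). lra.
  - exact BR.
  - exact BI.
  - intros t [l Hl]. apply (DR t). exists (fst l). intros eps Heps.
    destruct (Hl eps Heps) as [del [Hdel H]].
    exists (mkposreal del Hdel). intros h Hh Hh2. simpl in Hh2.
    specialize (H h Hh Hh2). eapply Rle_lt_trans; [|exact H].
    pose proof (Cmod_fst (Csub (fst (Csub (F1 a b (t + h)) (F1 a b t)) / h, snd (Csub (F1 a b (t + h)) (F1 a b t)) / h) l)).
    unfold Csub, F1 in *. simpl in *. exact H0.
  - exact DR.
  - exact DI.
  - intros Hab t. split; [|split; [apply LR; auto|apply LI; auto]].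
    intros [L0 [eta [HL0 [Heta HL]]]]. apply (LR Hab t). exists L0, eta. repeat split; auto.
    intros t' Ht'. specialize (HL t' Ht').
    pose proof (Cmod_fst (Csub (F1 a b t') (F1 a b t))). unfold Csub, F1 in *. simpl in *. lra.
Qed.
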